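(* Let $G=(V,E)$ be a finite graph with special vertex $i$, symmetric edge weights $w_E$ (with $w_E(u,v)=0$ for $uv\notin E$) and vertex weights $w_V$ (nonnegative, not identically zero). If $G$ and $G-i$ are each positively connected, then the largest eigenvalue of $L_i^{-1}W_{V,i}$ is simple. Equivalently, up to multiplication by $-1$, the solution of $$\min_{\|g\|_w=1,\ g(i)=0}\ \sum_{jk\in E} w_E(j,k)\,(g(k)-g(j))^2$$ is unique.
   Context: $\|g\|_w=\sqrt{\sum_{u\in V}w_V(u)g(u)^2}$; each edge is counted once. $L=D-W_E$ is the weighted Laplacian, with $W_E=(w_E(u,v))$ and $D$ diagonal with $d(k)=\sum_j w_E(k,j)$; $L_i$ is $L$ with row and column $i$ deleted (invertible under the hypotheses); $W_{V,i}$ is the diagonal matrix of vertex weights with row and column $i$ deleted. A weighted graph is positively connected if any two vertices are joined by a path of positive-weight edges; $G-i$ is $G$ with $i$ deleted. *)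

(* Defs.v *)
From HB Require Import structures.
From mathcomp Require Import all_boot all_order all_algebra.
Set Implicit Arguments. Unset Strict Implicit. Unset Printing Implicit Defensive.
Import Order.TTheory GRing.Theory Num.Theory.
Local Open Scope ring_scope.

(* Vertex set V = 'I_n.+1; edge weights given by a matrix WE (WE u v = w_E(u,v),
   zero for non-edges); vertex weights wV : 'I_n.+1 -> R. *)

Section Defs.
Variable R : rcfType.

Definition laplacian (m : nat) (WE : 'M[R]_m) : 'M[R]_m :=
  diag_mx (\row_k (\sum_j WE k j)) - WE.

Definition lap_del (n : nat) (WE : 'M[R]_n.+1) (i : 'I_n.+1) : 'M[R]_n :=
  \matrix_(j, k) laplacian WE (lift i j) (lift i k).

Definition wV_del (n : nat) (wV : 'I_n.+1 -> R) (i : 'I_n.+1) : 'M[R]_n :=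
  diag_mx (\row_j wV (lift i j)).

Definition pos_connected (T : finType) (w : T -> T -> R) : Prop :=
  forall u v : T, connect (fun a b => 0 < w a b) u v.

Definition del_weights (n : nat) (WE : 'M[R]_n.+1) (i : 'I_n.+1) : 'I_n -> 'I_n -> R :=
  fun a b => WE (lift i a) (lift i b).

Definition wnorm2 (n : nat) (wV : 'I_n.+1 -> R) (g : 'I_n.+1 -> R) : R :=
  \sum_u wV u * g u ^+ 2.

Definition energy (n : nat) (WE : 'M[R]_n.+1) (g : 'I_n.+1 -> R) : R :=
  \sum_(j : 'I_n.+1) \sum_(k : 'I_n.+1 | (j < k)%N) WE j k * (g k - g j) ^+ 2.

Definition feasible (n : nat) (wV : 'I_n.+1 -> R) (i : 'I_n.+1) (g : 'I_n.+1 -> R) : Prop :=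
  wnorm2 wV g = 1 /\ g i = 0.

Definition is_minimizer (n : nat) (WE : 'M[R]_n.+1) (wV : 'I_n.+1 -> R) (i : 'I_n.+1)
  (g : 'I_n.+1 -> R) : Prop :=
  feasible wV i g /\ forall h, feasible wV i h -> energy WE g <= energy WE h.

End Defs.

(* Main.v *)
Require Import Defs.
From HB Require Import structures.
From mathcomp Require Import all_boot all_order all_algebra.
From mathcomp Require Import ring lra.
From mathcomp Require Import complex.
From Stdlib Require Import FunctionalExtensionality.
Set Implicit Arguments. Unset Strict Implicit. Unset Printing Implicit Defensive.
Import Order.TTheory GRing.Theory Num.Theory.
Local Open Scope ring_scope.
Section SRL.
Variable R : rcfType.
Local Open Scope sesquilinear_scope.
Local Notation C := (R[i]).
Local Notation toC := (real_complex R).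

Lemma ReD (a b : C) : complex.Re (a + b) = complex.Re a + complex.Re b.
Proof. by case: a; case: b. Qed.
Lemma ImD (a b : C) : complex.Im (a + b) = complex.Im a + complex.Im b.
Proof. by case: a; case: b. Qed.
Lemma ReMr (a : C) (s : R) : complex.Re (a * toC s) = complex.Re a * s.
Proof. by case: a => x y /=; rewrite mulr0 subr0. Qed.
Lemma ImMr (a : C) (s : R) : complex.Im (a * toC s) = complex.Im a * s.
Proof. by case: a => x y /=; rewrite mulr0 add0r. Qed.
Lemma ReMl (a : C) (s : R) : complex.Re (toC s * a) = s * complex.Re a.
Proof. by rewrite mulrC ReMr mulrC. Qed.
Lemma ImMl (a : C) (s : R) : complex.Im (toC s * a) = s * complex.Im a.
Proof. by rewrite mulrC ImMr mulrC. Qed.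

Lemma Re_sum (I : finType) (F : I -> C) :
  complex.Re (\sum_i F i) = \sum_i complex.Re (F i).
Proof. by apply: (big_morph _ ReD). Qed.
Lemma Im_sum (I : finType) (F : I -> C) :
  complex.Im (\sum_i F i) = \sum_i complex.Im (F i).
Proof. by apply: (big_morph _ ImD). Qed.

Lemma toC_real (x : R) : toC x \is Num.real.
Proof. by rewrite complex_real. Qed.

Lemma conj_toC (x : R) : (toC x)^* = toC x.
Proof. exact/conj_Creal/toC_real. Qed.

Lemma SRL n (S : 'M[R]_n.+1) : S^T = S ->
  exists lam (y : 'rV[R]_n.+1), [/\ y != 0, y *m S = lam *: y &
     forall x : 'rV_n.+1, (x *m S *m x^T) 0 0 <= lam * (x *m x^T) 0 0].
Proof.
move=> Ssym.
pose SC := map_mx toC S.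
have herm : SC \is hermsymmx.
  apply/is_hermitianmxP; rewrite expr0 scale1r.
  apply/matrixP => a b; rewrite !mxE conj_toC.
  by rewrite -{1}Ssym mxE.
have /orthomx_spectralP eqS := hermitian_normalmx herm.
set P := spectralmx SC in eqS.
set d := spectral_diag SC in eqS.
have Pu : P \is unitarymx := spectral_unitarymx SC.
have Punit : P \in unitmx := unitarymx_unit Pu.
have dreal : d \is a realmx := hermitian_spectral_diag_real herm.
pose k := [arg max_(j > (ord0 : 'I_n.+1)) complex.Re (d 0 j)]%O.
pose lam := complex.Re (d 0 k).
have dk : d 0 k = toC lam.
  by rewrite /lam RRe_real //; move/mxOverP: dreal; apply.
have dle : forall j, d 0 j <= toC lam.
  move=> j; have dj : d 0 j = toC (complex.Re (d 0 j)).
    by rewrite RRe_real //; move/mxOverP: dreal; apply.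
  rewrite dj lecR /lam /k; case: arg_maxP => // m _; apply.
  by [].
exists lam.
pose u := row k P.
have uS : u *m SC = toC lam *: u.
  rewrite eqS /u !mulmxA -row_mul mulmxV // row1 mul_mx_diag.
  rewrite rowE scalemxAl; congr (_ *m _).
  apply/matrixP => a b; rewrite !mxE; case: (b =P k) => [->|_].
    by rewrite dk mulrC.
  by rewrite andbF mul0r mulr0.
have unz : u != 0.
  apply/eqP => u0; have : row k (P *m invmx P) = 0 by rewrite row_mul -/u u0 mul0mx.
  rewrite mulmxV // row1 => /matrixP /(_ 0 k); rewrite !mxE !eqxx /=.
  by move/eqP; rewrite oner_eq0.
pose ur := map_mx (@complex.Re R) u.
pose ui := map_mx (@complex.Im R) u.
have ReS : forall v : 'rV[C]_n.+1, map_mx (@complex.Re R) (v *m SC) = map_mx (@complex.Re R) v *m S.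
  move=> v; apply/matrixP => a b; rewrite !mxE Re_sum; apply: eq_bigr => j _.
  by rewrite !mxE ReMr.
have ImS : forall v : 'rV[C]_n.+1, map_mx (@complex.Im R) (v *m SC) = map_mx (@complex.Im R) v *m S.
  move=> v; apply/matrixP => a b; rewrite !mxE Im_sum; apply: eq_bigr => j _.
  by rewrite !mxE ImMr.
have urS : ur *m S = lam *: ur.
  rewrite -ReS uS; apply/matrixP => a b; rewrite !mxE.
  by rewrite ReMl.
have uiS : ui *m S = lam *: ui.
  rewrite -ImS uS; apply/matrixP => a b; rewrite !mxE.
  by rewrite ImMl.
have PtP : P^t* *m P = 1%:M by rewrite -invmx_unitary // mulVmx.
have tmul : forall m p q (A : 'M[C]_(m, p)) (B : 'M[C]_(p, q)), (A *m B)^t* = B^t* *m A^t*.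
  by move=> m p q A B; rewrite trmx_mul map_mxM.
have Ray : forall x : 'rV_n.+1, (x *m S *m x^T) 0 0 <= lam * (x *m x^T) 0 0.
  move=> x; pose xC := map_mx toC x.
  have xCt : xC^t* = xC^T.
    by apply/matrixP => a b; rewrite !mxE conj_toC.
  have e0 : forall (A : 'M[R]_(1, n.+1)) (B : 'M_n.+1), toC ((A *m B *m A^T) 0 0) =
      (map_mx toC A *m map_mx toC B *m (map_mx toC A)^t*) 0 0.
    move=> A B; have -> : (map_mx toC A)^t* = map_mx toC A^T.
      by apply/matrixP => a b; rewrite !mxE conj_toC.
    by rewrite -!map_mxM [RHS]mxE.
  have e2 : toC ((x *m x^T) 0 0) = (xC *m xC^t*) 0 0.
    by rewrite xCt /xC map_trmx -map_mxM [RHS]mxE.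
  rewrite -lecR (rmorphM (real_complex R)) /= e0 e2 -/xC -/SC.
  rewrite eqS invmx_unitary // !mulmxA.
  set y := xC *m P^t*.
  rewrite -(mulmxA _ P).
  have -> : P *m xC^t* = y^t* by rewrite /y tmul trmxCK.
  have -> : xC *m xC^t* = y *m y^t*.
    by rewrite tmul trmxCK /y mulmxA -(mulmxA xC) PtP mulmx1.
  clearbody y.
  rewrite mul_mx_diag !mxE mulr_sumr; apply: ler_sum => j _; rewrite !mxE.
  rewrite mulrAC [toC lam * _]mulrC; apply: ler_wpM2l.
    by rewrite mul_conjC_ge0.
  exact: dle.
case: (eqVneq ur 0) => [ur0|urn]; last by exists ur.
case: (eqVneq ui 0) => [ui0|uin]; last by exists ui.
case/eqP: unz; apply/matrixP => a b.
move/matrixP/(_ a b): ur0; move/matrixP/(_ a b): ui0; rewrite !mxE.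
by case: (P k b) => p q /= -> ->.
Qed.
End SRL.

Section Gen.
Variable R : rcfType.

Definition qf k (K : 'M[R]_k) (x y : 'rV[R]_k) : R := (x *m K *m y^T) 0 0.

Lemma qfDl k (K : 'M[R]_k) x y z : qf K (x + y) z = qf K x z + qf K y z.
Proof. by rewrite /qf !mulmxDl mxE. Qed.
Lemma qfDr k (K : 'M[R]_k) x y z : qf K z (x + y) = qf K z x + qf K z y.
Proof. by rewrite /qf linearD /= mulmxDr mxE. Qed.
Lemma qfZl k (K : 'M[R]_k) s x z : qf K (s *: x) z = s * qf K x z.
Proof. by rewrite /qf -!scalemxAl mxE. Qed.
Lemma qfZr k (K : 'M[R]_k) s x z : qf K z (s *: x) = s * qf K z x.
Proof. by rewrite /qf linearZ /= -scalemxAr mxE. Qed.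
Lemma qfN k (K : 'M[R]_k) x z : qf K z (- x) = - qf K z x.
Proof. by rewrite -scaleN1r qfZr mulN1r. Qed.
Lemma qfNl k (K : 'M[R]_k) x z : qf K (- x) z = - qf K x z.
Proof. by rewrite -scaleN1r qfZl mulN1r. Qed.

Lemma qf_sym k (K : 'M[R]_k) x y : K^T = K -> qf K x y = qf K y x.
Proof.
move=> Ks; rewrite /qf.
have -> : (x *m K *m y^T) 0 0 = ((x *m K *m y^T)^T) 0 0 by rewrite [RHS]mxE.
by rewrite !trmx_mul trmxK Ks mulmxA.
Qed.

Lemma qf_sum k (K : 'M[R]_k) x y :
  qf K x y = \sum_a \sum_b x 0 a * K a b * y 0 b.
Proof.
rewrite /qf mxE exchange_big; apply: eq_bigr => b _; rewrite !mxE mulr_suml.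
by apply: eq_bigr => a _; rewrite ?mxE.
Qed.

Lemma quad (a b c : R) : 0 <= c -> (forall s, 0 <= a + 2 * s * b + s ^+ 2 * c) ->
  b ^+ 2 <= a * c.
Proof.
move=> c0 H; have [cz|cn] := eqVneq c 0.
  rewrite cz mulr0; have [bz|bn] := eqVneq b 0; first by rewrite bz expr0n.
  have := H (- (a + 1) / (2 * b)); rewrite cz mulr0 addr0.
  have -> : a + 2 * (- (a + 1) / (2 * b)) * b = -1.
    by field.
  by rewrite ler0N1.
have cp : 0 < c by rewrite lt_def cn.
have := H (- b / c).
have -> : a + 2 * (- b / c) * b + (- b / c) ^+ 2 * c = a - b ^+ 2 / c.
  by field.
by rewrite subr_ge0 ler_pdivrMr.
Qed.

Lemma psd_cs k (K : 'M[R]_k) x y : K^T = K -> (forall z, 0 <= qf K z z) ->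
  qf K x y ^+ 2 <= qf K x x * qf K y y.
Proof.
move=> Ks Kp; apply: quad => // s.
have := Kp (x + s *: y).
rewrite !qfDl !qfDr !qfZl !qfZr (@qf_sym _ K y x Ks).
have -> : qf K x x + s * qf K x y + (s * qf K x y + s * (s * qf K y y)) =
  qf K x x + 2 * s * qf K x y + s ^+ 2 * qf K y y by ring.
by [].
Qed.

Lemma psd_ker k (K : 'M[R]_k) x : K^T = K -> (forall z, 0 <= qf K z z) ->
  qf K x x = 0 -> x *m K = 0.
Proof.
move=> Ks Kp x0; apply/rowP => j; rewrite [RHS]mxE.
have := @psd_cs _ K x (delta_mx 0 j) Ks Kp; rewrite x0 mul0r.
have -> : qf K x (delta_mx 0 j) = (x *m K) 0 j.
  rewrite /qf mxE (bigD1 j) //= big1 ?addr0.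
    by rewrite !mxE !eqxx mulr1.
  by move=> b bj; rewrite !mxE (negbTE bj) andbF mulr0.
move=> h; apply/eqP; rewrite -sqrf_eq0 eq_le h sqr_ge0.
by [].
Qed.


Lemma qf_delta k (x : 'rV[R]_k) j : (x *m (delta_mx (0 : 'I_1) j)^T) 0 0 = x 0 j.
Proof.
rewrite mxE (bigD1 j) //= big1 ?addr0; first by rewrite !mxE !eqxx mulr1.
by move=> b bj; rewrite !mxE (negbTE bj) andbF mulr0.
Qed.

Lemma dot_ge0 k (a : 'rV[R]_k) : 0 <= (a *m a^T) 0 0.
Proof. by rewrite mxE sumr_ge0 // => j _; rewrite mxE -expr2 sqr_ge0. Qed.

Lemma GPL m (M : 'M[R]_m.+1) (w : 'I_m.+1 -> R) :
  M^T = M -> (forall j, 0 <= w j) -> (exists j, 0 < w j) ->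
  (forall x, x != 0 -> 0 < qf M x x) ->
  exists lam (t : 'rV_m.+1), [/\ 0 < lam, t != 0,
     t *m diag_mx (\row_j w j) = lam *: (t *m M) &
     forall x, qf (diag_mx (\row_j w j)) x x <= lam * qf M x x].
Proof.
move=> Ms w0 [j0 wj0] PD.
set D := diag_mx _.
have PSD : forall x, 0 <= qf M x x.
  move=> x; have [->|xn] := eqVneq x 0; last exact/ltW/PD.
  by rewrite /qf !mul0mx mxE.
have Munit : M \in unitmx.
  rewrite -row_free_unit -kermx_eq0; apply: contraT => /rowV0Pn [v /sub_kermxP vM vn].
  by have := PD v vn; rewrite /qf vM mul0mx mxE ltxx.
pose Mi := invmx M.
have Mis : Mi^T = Mi by rewrite /Mi trmx_inv Ms.
have qMi : forall z, qf M (z *m Mi) (z *m Mi) = qf Mi z z.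
  move=> z; rewrite /qf trmx_mul Mis !mulmxA mulmxKV //.
have MiPD : forall z, z != 0 -> 0 < qf Mi z z.
  move=> z zn; rewrite -qMi; apply: PD; apply: contraNneq zn => zM.
  by rewrite -(mulmxKV Munit z) -/Mi zM mul0mx.
have MiPSD : forall z, 0 <= qf Mi z z.
  move=> z; have [->|zn] := eqVneq z 0; last exact/ltW/MiPD.
  by rewrite /qf !mul0mx mxE.
pose F := diag_mx (\row_j Num.sqrt (w j)).
have FF : F *m F = D.
  rewrite /F mulmx_diag; congr diag_mx; apply/rowP => j; rewrite !mxE.
  by rewrite -expr2 sqr_sqrtr.
have Ft : F^T = F by rewrite tr_diag_mx.
pose S := F *m Mi *m F.
have St : S^T = S by rewrite /S !trmx_mul Ft Mis mulmxA.
have [lam [y [yn yS Ray]]] := SRL St.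
have qS : forall a, qf S a a = qf Mi (a *m F) (a *m F).
  by move=> a; rewrite /qf /S trmx_mul Ft !mulmxA.
have lam_gt0 : 0 < lam.
  pose e := delta_mx 0 j0 : 'rV[R]_m.+1.
  have := Ray e; rewrite -/(qf S e e) qf_delta /e mxE !eqxx mulr1 -/e qS.
  have -> : e *m F = Num.sqrt (w j0) *: e.
    apply/rowP => j; rewrite /F mul_mx_diag !mxE.
    by case: (j =P j0) => [->|_]; rewrite ?mulr1 ?mul1r ?mulr0 ?mul0r ?andbF ?andbT /=; rewrite ?mulr0 ?mul0r ?mulr1 ?mul1r.
  rewrite qfZl qfZr mulrA -expr2 sqr_sqrtr; last exact: ltW.
  move=> h; apply: (lt_le_trans _ h); apply: mulr_gt0 => //; apply: MiPD.
  by apply/eqP => /rowP /(_ j0); rewrite !mxE !eqxx /= => /eqP; rewrite oner_eq0.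
exists lam, (y *m F *m Mi); split => //.
- apply: contraNneq yn => t0.
  have yF0 : y *m F = 0 by rewrite -(mulmxKV Munit (y *m F)) -/Mi t0 mul0mx.
  have : lam *: y = 0 by rewrite -yS /S !mulmxA yF0 !mul0mx.
  by move/eqP; rewrite scaler_eq0 (gt_eqF lam_gt0).
- rewrite mulmxKV // -FF !mulmxA -(mulmxA y F Mi) -[y *m (F *m Mi) *m F]mulmxA.
  by rewrite -/S yS scalemxAl.
- move=> x; pose a := x *m F.
  have qD : qf D x x = (a *m a^T) 0 0.
    by rewrite /qf -FF /a trmx_mul Ft !mulmxA.
  have cs := @psd_cs _ Mi (x *m M) (a *m F) Mis MiPSD.
  have e1 : qf Mi (x *m M) (a *m F) = (a *m a^T) 0 0.
    by rewrite /qf (trmx_mul a F) Ft mulmxK // mulmxA.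
  have e2 : qf Mi (x *m M) (x *m M) = qf M x x.
    by rewrite /qf !trmx_mul Ms mulmxK // mulmxA.
  rewrite e1 e2 -qS in cs.
  have r0 := dot_ge0 a.
  rewrite qD; have [rz|rn] := eqVneq ((a *m a^T) 0 0) 0.
    by rewrite rz mulr_ge0 // ltW.
  have rp : 0 < (a *m a^T) 0 0 by rewrite lt_def rn.
  have h : (a *m a^T) 0 0 ^+ 2 <= qf M x x * (lam * (a *m a^T) 0 0).
    by apply: (le_trans cs); apply: ler_wpM2l => //; apply: Ray.
  rewrite expr2 mulrA [_ * lam]mulrC in h.
  by rewrite -(ler_pM2r rp).
Qed.
Lemma simple_mup m (A : 'M[R]_m.+1) lam (u : 'rV_m.+1) :
  u != 0 -> u *m A = lam *: u ->
  (forall (w : 'rV_m.+1) c, w *m A = lam *: w + c *: u ->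
      c = 0 /\ exists a, w = a *: u) ->
  mup lam (char_poly A) = 1%N.
Proof.
move=> un uA Hj.
have [k uk] : exists k, u 0 k != 0.
  case/boolP: [exists k, u 0 k != 0] => [/existsP //|/existsPn H].
  by case/eqP: un; apply/rowP => j; rewrite mxE; move/negPn/eqP: (H j).
pose P := \matrix_(a, b) (if a == k then u 0 b else (a == b)%:R) : 'M[R]_m.+1.
have rowkP : row k P = u by apply/rowP => b; rewrite !mxE eqxx.
have detP : \det P = u 0 k.
  rewrite (expand_det_row _ k) (bigD1 k) //= big1 ?addr0.
    rewrite mxE eqxx /cofactor -signr_odd addnn odd_double expr0 mul1r.
    have -> : row' k (col' k P) = 1%:M.
      apply/matrixP => a b; rewrite !mxE eq_sym (negbTE (neq_lift k a)).
      by rewrite (inj_eq lift_inj).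
    by rewrite det1 mulr1.
  move=> b bk; rewrite eq_sym in bk; have [a -> _] := unlift_some bk.
  rewrite /cofactor (expand_det_row _ a) big1 ?mulr0 // => c _.
  rewrite !mxE eq_sym (negbTE (neq_lift k a)) (negbTE (neq_lift _ c)).
  by rewrite mul0r.
have Punit : P \in unitmx by rewrite unitmxE detP unitfE.
pose T := P *m A *m invmx P.
have TP : T *m P = P *m A by rewrite /T mulmxKV.
have rowkT : row k T = lam *: delta_mx 0 k.
  rewrite /T !row_mul rowkP uA -scalemxAl -rowkP -row_mul mulmxV // row1.
  by [].
have Tk : forall b, T k b = lam * (b == k)%:R.
  move=> b; move/rowP: rowkT => /(_ b); rewrite !mxE /=.
  by rewrite eq_sym.
have cpT : char_poly_mx T =
    map_mx polyC P *m char_poly_mx A *m map_mx polyC (invmx P).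
  rewrite /char_poly_mx mulmxBr mulmxBl scalar_mxC -(mulmxA 'X%:M) -map_mxM mulmxV //.
  by rewrite map_mx1 mulmx1 -!map_mxM.
have cAT : char_poly A = char_poly T.
  rewrite /char_poly cpT !det_mulmx mulrAC -det_mulmx -map_mxM mulmxV //.
  by rewrite map_mx1 det1 mul1r.
clearbody T.
pose T' := row' k (col' k T).
have cT : char_poly T = ('X - lam%:P) * char_poly T'.
  rewrite /char_poly (expand_det_row _ k) (bigD1 k) //= big1 ?addr0.
    rewrite /cofactor -signr_odd addnn odd_double expr0 mul1r.
    have -> : char_poly_mx T k k = 'X - lam%:P.
      by rewrite !mxE eqxx (Tk k) eqxx mulr1 mulr1n.
    have -> : row' k (col' k (char_poly_mx T)) = char_poly_mx T'.
      by apply/matrixP => a b; rewrite !mxE (inj_eq lift_inj).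
    by [].
  move=> b bk; rewrite !mxE Tk (negbTE bk) mulr0 eq_sym (negbTE bk).
  by rewrite mulr0n subr0 mul0r.
rewrite cAT cT mupMl.
  by rewrite -[X in mup _ X]expr1 mup_XsubCX eqxx.
rewrite -eigenvalue_root_char; apply/negP => /eigenvalueP [y yT yn].
pose z := \row_b (if unlift k b is Some j then y 0 j else 0) : 'rV[R]_m.+1.
have zk : z 0 k = 0 by rewrite mxE unlift_none.
have zl : forall j, z 0 (lift k j) = y 0 j by move=> j; rewrite mxE liftK.
clearbody z.
pose c := (z *m T) 0 k.
have zT : z *m T = lam *: z + c *: delta_mx 0 k.
  apply/rowP => b; rewrite [LHS]mxE [RHS]mxE [X in _ = X + _]mxE [X in _ = _ + X]mxE mxE.
  case: (unliftP k b) => [j ->|->].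
    rewrite eq_sym (negbTE (neq_lift k j)) andbF mulr0 addr0 zl.
    rewrite (bigD1_ord k) //= zk mul0r add0r.
    move/rowP: yT => /(_ j); rewrite !mxE => <-.
    by apply: eq_bigr => a _; rewrite zl !mxE.
  by rewrite zk mulr0 add0r !eqxx mulr1 /c mxE.
have wA : (z *m P) *m A = lam *: (z *m P) + c *: u.
  by rewrite -mulmxA -TP mulmxA zT mulmxDl -!scalemxAl -rowE rowkP.
have [c0 [a za]] := Hj _ _ wA.
have zae : z = a *: delta_mx 0 k.
  by rewrite -(mulmxK Punit z) za -rowkP rowE scalemxAl mulmxK.
have a0 : a = 0.
  by have := zk; rewrite zae !mxE !eqxx mulr1.
case/eqP: yn; apply/rowP => j; rewrite -zl zae a0 scale0r !mxE.
by [].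
Qed.

End Gen.
Section Graph.
Variable R : rcfType.

Lemma connect_prop (T : finType) (e : rel T) (P : pred T) :
  (forall a b, e a b -> P a -> P b) -> forall a b, connect e a b -> P a -> P b.
Proof.
move=> H a b /connectP [p pth ->]; elim: p a pth => //= c p IH a /andP [eac pth] Pa.
exact: IH pth (H _ _ eac Pa).
Qed.

Definition ext n (i : 'I_n.+1) (x : 'rV[R]_n) : 'I_n.+1 -> R :=
  fun v => if unlift i v is Some j then x 0 j else 0.
Definition red n (i : 'I_n.+1) (g : 'I_n.+1 -> R) : 'rV[R]_n := \row_j g (lift i j).

Lemma ext_i n (i : 'I_n.+1) x : ext i x i = 0.
Proof. by rewrite /ext unlift_none. Qed.
Lemma ext_lift n (i : 'I_n.+1) x j : ext i x (lift i j) = x 0 j.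
Proof. by rewrite /ext liftK. Qed.
Lemma red_ext n (i : 'I_n.+1) x : red i (ext i x) = x.
Proof. by apply/rowP => j; rewrite mxE ext_lift. Qed.
Lemma ext_red n (i : 'I_n.+1) g : g i = 0 -> ext i (red i g) = g.
Proof.
move=> gi; apply: functional_extensionality => v; rewrite /ext.
by case: unliftP => [j ->|->]; rewrite ?mxE.
Qed.

Definition fullq n (WE : 'M[R]_n.+1) (g : 'I_n.+1 -> R) :=
  \sum_u \sum_v g u * laplacian WE u v * g v.

Definition Qs n (WE : 'M[R]_n.+1) (g : 'I_n.+1 -> R) :=
  \sum_u \sum_v WE u v * (g v - g u) ^+ 2.

Lemma qf_lap n (WE : 'M[R]_n.+1) i x :
  qf (lap_del WE i) x x = fullq WE (ext i x).
Proof.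
rewrite qf_sum /fullq (bigD1_ord i) //= [X in X + _]big1 => [|v _]; last first.
  by rewrite ext_i !mul0r.
rewrite add0r; apply: eq_bigr => a _; rewrite (bigD1_ord i) //= ext_i mulr0 add0r.
by apply: eq_bigr => b _; rewrite !ext_lift !mxE.
Qed.

Lemma WEsym n (WE : 'M[R]_n.+1) : WE^T = WE -> forall u v, WE u v = WE v u.
Proof. by move=> Ws u v; rewrite -{1}Ws mxE. Qed.

Lemma fullq_Q n (WE : 'M[R]_n.+1) g : WE^T = WE -> fullq WE g * 2 = Qs WE g.
Proof.
move=> /WEsym Ws.
have E : \sum_u \sum_v WE u v * g v ^+ 2 = \sum_u \sum_v WE u v * g u ^+ 2.
  by rewrite exchange_big; apply: eq_bigr => u _; apply: eq_bigr => v _; rewrite Ws.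
have F1 : fullq WE g = \sum_u \sum_v (WE u v * g u ^+ 2 - g u * WE u v * g v).
  apply: eq_bigr => u _.
  have -> : \sum_v g u * laplacian WE u v * g v =
     \sum_v (g u * ((\sum_j WE u j) *+ (u == v)) * g v) - \sum_v g u * WE u v * g v.
    by rewrite -sumrB; apply: eq_bigr => v _; rewrite !mxE mulrBr mulrBl.
  rewrite sumrB; congr (_ - _).
  rewrite (bigD1 u) //= [X in _ + X]big1 ?addr0.
    by rewrite eqxx mulr1n -mulr_suml; ring.
  by move=> v vu; rewrite eq_sym (negbTE vu) mulr0n mulr0 mul0r.
have F2 : Qs WE g = \sum_u \sum_v WE u v * g v ^+ 2 +
   \sum_u \sum_v (WE u v * g u ^+ 2 - (g u * WE u v * g v) *+ 2).
  rewrite -big_split; apply: eq_bigr => u _; rewrite -big_split; apply: eq_bigr => v _ /=.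
  by rewrite sqrrB; ring.
rewrite F2 E F1 -big_split /= mulr_suml; apply: eq_bigr => u _.
rewrite -big_split /= mulr_suml; apply: eq_bigr => v _ /=.
by rewrite mulr2n; ring.
Qed.

Lemma energy_Q n (WE : 'M[R]_n.+1) g : WE^T = WE -> energy WE g * 2 = Qs WE g.
Proof.
move=> /WEsym Ws.
pose F u v := WE u v * (g v - g u) ^+ 2.
have Fs : forall u v, F u v = F v u.
  by move=> u v; rewrite /F Ws -opprB sqrrN.
have E1 : Qs WE g = \sum_(u : 'I_n.+1) \sum_(v : 'I_n.+1) ((if (u < v)%N then F u v else 0) + (if (v < u)%N then F u v else 0)).
  apply: eq_bigr => u _; apply: eq_bigr => v _.
  case: ltngtP => [uv|vu|/val_inj uv]; rewrite ?addr0 ?add0r //.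
  by rewrite /F uv subrr expr0n mulr0.
rewrite E1; under eq_bigr do rewrite big_split /=.
rewrite big_split /= mulrDr mulr1; congr (_ + _).
  by apply: eq_bigr => u _; rewrite big_mkcond.
rewrite exchange_big /energy; apply: eq_bigr => u _; rewrite big_mkcond.
by apply: eq_bigr => v _; rewrite Fs.
Qed.

Lemma mxBE (A B : 'M[R]_1) : (A - B) 0 0 = A 0 0 - B 0 0.
Proof. by rewrite !mxE. Qed.
Lemma mxZE (A : 'M[R]_1) c : (c *: A) 0 0 = c * A 0 0.
Proof. by rewrite !mxE. Qed.
Lemma qfB k (A B : 'M[R]_k) x y : qf (A - B) x y = qf A x y - qf B x y.
Proof. by rewrite /qf mulmxBr mulmxBl mxBE. Qed.
Lemma qfZm k (A : 'M[R]_k) c x y : qf (c *: A) x y = c * qf A x y.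
Proof. by rewrite /qf -scalemxAr -scalemxAl mxZE. Qed.

Lemma Qs_ge0 n (WE : 'M[R]_n.+1) g : (forall u v, 0 <= WE u v) -> 0 <= Qs WE g.
Proof.
by move=> W0; apply: sumr_ge0 => u _; apply: sumr_ge0 => v _; rewrite mulr_ge0 ?sqr_ge0.
Qed.

Lemma lap_psd n (WE : 'M[R]_n.+1) i x : WE^T = WE -> (forall u v, 0 <= WE u v) ->
  0 <= qf (lap_del WE i) x x.
Proof.
move=> Ws W0; rewrite -(pmulr_lge0 _ (ltr0Sn R 1)) qf_lap fullq_Q //.
exact: Qs_ge0.
Qed.

Lemma lap_PD n (WE : 'M[R]_n.+1) i x : WE^T = WE -> (forall u v, 0 <= WE u v) ->
  pos_connected (fun u v => WE u v) ->
  x != 0 -> 0 < qf (lap_del WE i) x x.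
Proof.
move=> Ws W0 Gc xn; rewrite lt_def lap_psd // andbT; apply/eqP => q0.
case/eqP: xn; pose g := ext i x.
have Q0 : Qs WE g = 0 by rewrite -fullq_Q // -qf_lap q0 mul0r.
have T0 : forall u v, WE u v * (g v - g u) ^+ 2 = 0.
  move=> u v.
  have H1 : \sum_v WE u v * (g v - g u) ^+ 2 = 0.
    apply: (psumr_eq0P _ Q0) => // w _.
    by apply: sumr_ge0 => z _; rewrite mulr_ge0 ?sqr_ge0.
  by apply: (psumr_eq0P _ H1) => // w _; rewrite mulr_ge0 ?sqr_ge0.
have edge : forall u v, 0 < WE u v -> g u == 0 -> g v == 0.
  move=> u v Wp /eqP gu; have := T0 u v; move/eqP; rewrite mulf_eq0 (gt_eqF Wp) /=.
  by rewrite sqrf_eq0 subr_eq0 gu.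
have gz : forall v, g v = 0.
  move=> v; apply/eqP; apply: (connect_prop edge (Gc i v)).
  by rewrite /g ext_i.
by rewrite -(red_ext i x); apply/rowP => j; rewrite !mxE -/g gz.
Qed.

Lemma qf_wV n (wV : 'I_n.+1 -> R) i x : qf (wV_del wV i) x x = wnorm2 wV (ext i x).
Proof.
rewrite qf_sum /wnorm2 (bigD1_ord i) //= ext_i expr0n /= mulr0 add0r.
apply: eq_bigr => a _; rewrite (bigD1 a) //= big1 ?addr0.
  by rewrite !mxE eqxx mulr1n ext_lift; ring.
by move=> b ba; rewrite !mxE eq_sym (negbTE ba) mulr0n mulr0 mul0r.
Qed.

Lemma lap_off n (WE : 'M[R]_n.+1) i a b : a != b ->
  lap_del WE i a b = - WE (lift i a) (lift i b).
Proof.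
by move=> ab; rewrite !mxE (inj_eq lift_inj) (negbTE ab) mulr0n sub0r.
Qed.

Lemma mxBE' m p (A B : 'M[R]_(m, p)) a b : (A - B) a b = A a b - B a b.
Proof. by rewrite !mxE. Qed.
Lemma mxZE' m p (A : 'M[R]_(m, p)) c a b : (c *: A) a b = c * A a b.
Proof. by rewrite !mxE. Qed.

Lemma lap_sym n (WE : 'M[R]_n.+1) i : WE^T = WE -> (lap_del WE i)^T = lap_del WE i.
Proof.
move=> Ws; apply/matrixP => a b; rewrite mxE; case: (eqVneq a b) => [->|ab] //.
rewrite !lap_off //; last by rewrite eq_sym.
by rewrite (WEsym Ws).
Qed.

Lemma perron n (WE : 'M[R]_n.+1) (wV : 'I_n.+1 -> R) i lam (t : 'rV[R]_n) :
  WE^T = WE -> (forall u v, 0 <= WE u v) -> (forall u, 0 <= wV u) ->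
  pos_connected (del_weights WE i) -> 0 < lam ->
  (forall x, qf (wV_del wV i) x x <= lam * qf (lap_del WE i) x x) ->
  t *m wV_del wV i = lam *: (t *m lap_del WE i) -> forall k, t 0 k = 0 -> t = 0.
Proof.
move=> Ws W0 w0 Gic lamp Ray tD.
have Ms := lap_sym i Ws.
have Moff : forall a b, a != b -> lap_del WE i a b = - WE (lift i a) (lift i b).
  by move=> a b; apply: lap_off.
have Dd : forall a b, wV_del wV i a b = wV (lift i a) *+ (a == b).
  by move=> a b; rewrite !mxE.
have sD : forall (s : 'rV_n) j, (s *m wV_del wV i) 0 j = s 0 j * wV (lift i j).
  by move=> s j; rewrite /wV_del mul_mx_diag !mxE.
have Ds : (wV_del wV i)^T = wV_del wV i by rewrite tr_diag_mx.
set M := lap_del WE i in Ms Moff Ray tD.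
set D := wV_del wV i in Dd sD Ds Ray tD.
clearbody M D.
pose N := lam *: M - D.
have Ns : N^T = N by rewrite /N linearB /= linearZ /= Ms Ds.
have qN : forall x, qf N x x = lam * qf M x x - qf D x x by move=> x; rewrite qfB qfZm.
have Npsd : forall x, 0 <= qf N x x by move=> x; rewrite qN subr_ge0.
have tN : t *m N = 0 by rewrite /N mulmxBr -scalemxAr tD subrr.
pose s := \row_j `|t 0 j|.
have sE : forall j, s 0 j = `|t 0 j| by move=> j; rewrite mxE.
clearbody s.
have qMs : qf M s s <= qf M t t.
  rewrite !qf_sum; apply: ler_sum => a _; apply: ler_sum => b _; rewrite !sE.
  case: (eqVneq a b) => [<-|ab].
    rewrite mulrAC [X in _ <= X]mulrAC -normrM ger0_norm //.
    by rewrite -expr2 sqr_ge0.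
  rewrite Moff // mulrAC [X in _ <= X]mulrAC -normrM.
  by apply: ler_wnM2r; [rewrite oppr_le0 | exact: ler_norm].
have qDs : qf D s s = qf D t t.
  rewrite !qf_sum; apply: eq_bigr => a _; apply: eq_bigr => b _; rewrite !sE Dd.
  case: (eqVneq a b) => [<-|ab]; last by rewrite !mulr0n !mulr0 !mul0r.
  rewrite ?eqxx ?mulr1n mulrAC [RHS]mulrAC -normrM ger0_norm //.
  by rewrite -expr2 sqr_ge0.
have qNs0 : qf N s s = 0.
  apply/eqP; rewrite eq_le Npsd andbT.
  have : qf N t t = 0 by rewrite /qf tN mul0mx mxE.
  by rewrite !qN qDs => <-; rewrite lerD2r; apply: ler_wpM2l => //; apply: ltW.
have sN : s *m N = 0 := psd_ker Ns Npsd qNs0.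
have sNj : forall j, lam * (s *m M) 0 j = s 0 j * wV (lift i j).
  move=> j; have z0 : (0 : 'rV[R]_n) 0 j = 0 by rewrite mxE.
  move/rowP/(_ j): sN; rewrite /N mulmxBr -scalemxAr mxBE' mxZE' sD z0.
  by move/eqP; rewrite subr_eq0 => /eqP.
have Z : forall j j', 0 < del_weights WE i j j' -> s 0 j == 0 -> s 0 j' == 0.
  move=> j j' Wp /eqP sj; have [<-|jj] := eqVneq j j'; first by rewrite sj.
  have := sNj j; rewrite sj mul0r => /eqP; rewrite mulf_eq0 (gt_eqF lamp) /=.
  rewrite mxE (bigD1 j) //= sj mul0r add0r => /eqP S0.
  have S1 : \sum_(a | a != j) s 0 a * WE (lift i a) (lift i j) = 0.
    rewrite -[RHS]oppr0 -[in RHS]S0 -sumrN; apply: eq_bigr => a aj.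
    by rewrite Moff // mulrN opprK.
  have H := psumr_eq0P _ S1.
  have sge0 : forall a, 0 <= s 0 a by move=> a; rewrite sE normr_ge0.
  have := H (fun a _ => mulr_ge0 (sge0 a) (W0 _ _)) j'; rewrite eq_sym jj.
  move=> /(_ isT) /eqP; rewrite mulf_eq0 => /orP [//|].
  by rewrite (WEsym Ws) (gt_eqF Wp).
move=> k tk; have sk : s 0 k == 0 by rewrite sE tk normr0.
apply/rowP => j; rewrite mxE.
have := connect_prop Z (Gic k j) sk.
by rewrite sE normr_eq0 => /eqP.
Qed.

Lemma onedim n (WE : 'M[R]_n.+1) (wV : 'I_n.+1 -> R) i lam (t0 t : 'rV[R]_n) :
  WE^T = WE -> (forall u v, 0 <= WE u v) -> (forall u, 0 <= wV u) ->
  pos_connected (del_weights WE i) -> 0 < lam ->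
  (forall x, qf (wV_del wV i) x x <= lam * qf (lap_del WE i) x x) ->
  t0 != 0 -> t0 *m wV_del wV i = lam *: (t0 *m lap_del WE i) ->
  t *m wV_del wV i = lam *: (t *m lap_del WE i) -> exists a, t = a *: t0.
Proof.
move=> Ws W0 w0 Gic lamp Ray t0n t0D tD.
have [k t0k] : exists k, t0 0 k != 0.
  case/boolP: [exists k, t0 0 k != 0] => [/existsP //|/existsPn H].
  by case/eqP: t0n; apply/rowP => j; rewrite mxE; move/negPn/eqP: (H j).
exists (t 0 k / t0 0 k).
apply/eqP; rewrite -subr_eq0; apply/eqP.
apply: (perron Ws W0 w0 Gic lamp Ray _ (k := k)).
  by rewrite mulmxBl tD -scalemxAl t0D mulmxBl scalerBr -scalemxAl !scalerA mulrC.
by rewrite mxBE' mxZE' divfK // subrr.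
Qed.

Lemma en_qf n (WE : 'M[R]_n.+1) i x : WE^T = WE ->
  energy WE (ext i x) = qf (lap_del WE i) x x.
Proof.
move=> Ws; have two : (2 : R) != 0 by rewrite pnatr_eq0.
apply: (mulIf two).
by rewrite energy_Q // qf_lap fullq_Q.
Qed.

Lemma ext_opp n (i : 'I_n.+1) x : ext i (- x) = (fun u => - ext i x u).
Proof.
apply: functional_extensionality => v; rewrite /ext.
by case: (unlift i v) => [j|]; rewrite ?mxE ?oppr0.
Qed.

Lemma PD_unit k (M : 'M[R]_k) : (forall x, x != 0 -> 0 < qf M x x) -> M \in unitmx.
Proof.
move=> PD; rewrite -row_free_unit -kermx_eq0; apply: contraT => /rowV0Pn [v /sub_kermxP vM vn].
by have := PD v vn; rewrite /qf vM mul0mx mxE ltxx.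
Qed.

Lemma mxDE (A B : 'M[R]_1) : (A + B) 0 0 = A 0 0 + B 0 0.
Proof. by rewrite !mxE. Qed.

End Graph.

Theorem theorem12 (R : rcfType) (n : nat) (WE : 'M[R]_n.+1) (wV : 'I_n.+1 -> R)
  (i : 'I_n.+1)
  (WE_sym : WE^T = WE)
  (WE_ge0 : forall u v, 0 <= WE u v)
  (wV_ge0 : forall u, 0 <= wV u)
  (wV_nz : exists2 u, u != i & wV u != 0)
  (G_conn : pos_connected (fun u v => WE u v))
  (Gi_conn : pos_connected (del_weights WE i)) :
  let A := invmx (lap_del WE i) *m wV_del wV i in
  (exists lam : R,
      [/\ eigenvalue A lam,
          (forall mu, eigenvalue A mu -> mu <= lam)
        & mup lam (char_poly A) = 1%N])
  /\
  (exists g0 : 'I_n.+1 -> R,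
      is_minimizer WE wV i g0 /\
      forall g, is_minimizer WE wV i g -> g = g0 \/ g = (fun u => - g0 u)).
Proof.
case: n WE wV i WE_sym WE_ge0 wV_ge0 wV_nz G_conn Gi_conn =>
  [|m] WE wV i WE_sym WE_ge0 wV_ge0 wV_nz G_conn Gi_conn A.
  by case: wV_nz => u; rewrite (ord1 u) (ord1 i) eqxx.
have PD : forall x, x != 0 -> 0 < qf (lap_del WE i) x x.
  by move=> x; apply: lap_PD.
have Ms := lap_sym i WE_sym.
have Munit := PD_unit PD.
have Ds : (wV_del wV i)^T = wV_del wV i by rewrite tr_diag_mx.
have w0 : forall j, 0 <= wV (lift i j) by move=> j; apply: wV_ge0.
have wpos : exists j, 0 < wV (lift i j).
  case: wV_nz => u ui wu; rewrite eq_sym in ui; have [j uj _] := unlift_some ui.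
  by exists j; rewrite -uj lt_def wu wV_ge0.
have [lam [t0 [lamp t0n t0D Ray]]] := GPL Ms w0 wpos PD.
set M := lap_del WE i in PD Ms Munit t0D Ray.
set D := wV_del wV i in Ds t0D Ray.
have ONE := onedim WE_sym WE_ge0 wV_ge0 Gi_conn lamp Ray t0n t0D.
rewrite -/M -/D in ONE.
have qt0 : 0 < qf M t0 t0 := PD _ t0n.
pose u := t0 *m M.
have un : u != 0.
  by apply: contraNneq t0n => u0; rewrite -(mulmxK Munit t0) -/u u0 mul0mx.
have uA : u *m A = lam *: u by rewrite /u /A mulmxA mulmxK // t0D.
split.
  exists lam; split.
  - by apply/eigenvalueP; exists u.
  - move=> mu /eigenvalueP [v vA vn].
    pose t := v *m invmx M.
    have tM : t *m M = v by rewrite /t mulmxKV.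
    have tD : t *m D = mu *: (t *m M) by rewrite tM -vA /A /t mulmxA.
    have tn : t != 0 by apply: contraNneq vn => t0'; rewrite -tM t0' mul0mx.
    have := Ray t; rewrite /qf tD -scalemxAl mxZE -/(qf M t t).
    by rewrite ler_pM2r //; apply: PD.
  - apply: (simple_mup un uA) => w c wA.
    pose s := w *m invmx M.
    have sM : s *m M = w by rewrite /s mulmxKV.
    have sD : s *m D = lam *: (s *m M) + c *: (t0 *m M).
      by rewrite sM -/u -wA /A /s mulmxA.
    have e1 : qf D s t0 = lam * qf M s t0 + c * qf M t0 t0.
      by rewrite /qf sD mulmxDl -!scalemxAl mxDE !mxZE.
    have e2 : qf D s t0 = lam * qf M s t0.
      by rewrite qf_sym // /qf t0D -scalemxAl mxZE -/(qf M t0 s) qf_sym.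
    have c0 : c = 0.
      have : c * qf M t0 t0 = 0.
        by rewrite -[c * _](addKr (lam * qf M s t0)) -e1 e2 addNr.
      by move/eqP; rewrite mulf_eq0 (gt_eqF qt0) orbF => /eqP.
    split => //.
    rewrite c0 scale0r addr0 in sD.
    have [a sa] := ONE s sD.
    by exists a; rewrite -sM sa -scalemxAl.
pose q0 := qf D t0 t0.
have q0E : q0 = lam * qf M t0 t0 by rewrite /q0 /qf t0D -scalemxAl mxZE.
have q0p : 0 < q0 by rewrite q0E mulr_gt0.
pose r := Num.sqrt q0.
have rp : 0 < r by rewrite sqrtr_gt0.
have r2 : r ^+ 2 = q0 by rewrite sqr_sqrtr // ltW.
pose x0 := r^-1 *: t0.
pose g0 := ext i x0.
have enE : forall x, energy WE (ext i x) = qf M x x by move=> x; rewrite en_qf.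
have wnE : forall x, wnorm2 wV (ext i x) = qf D x x by move=> x; rewrite -qf_wV.
have Dx0 : qf D x0 x0 = 1.
  rewrite /x0 qfZl qfZr mulrA -expr2 exprVn r2 mulVf //.
  by rewrite gt_eqF.
have Mx0 : qf M x0 x0 * lam = 1.
  rewrite /x0 qfZl qfZr mulrA -expr2 exprVn r2 q0E.
  by field; rewrite (gt_eqF lamp) (gt_eqF qt0).
have Rinv : forall y, qf D y y = 1 -> qf M x0 x0 <= qf M y y.
  move=> y Dy; rewrite -(ler_pM2r lamp) Mx0 mulrC -Dy; exact: Ray.
have feas0 : feasible wV i g0 by split; [rewrite /g0 wnE | rewrite /g0 ext_i].
have min0 : is_minimizer WE wV i g0.
  split => // h [hn hi]; rewrite -(ext_red hi) /g0 !enE; apply: Rinv.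
  by rewrite -wnE ext_red.
exists g0; split => // g [[gn gi] gmin].
pose y := red i g.
have gE : g = ext i y by rewrite ext_red.
have Dy : qf D y y = 1 by rewrite -wnE -gE.
have My : qf M y y <= qf M x0 x0 by rewrite -!enE -gE; apply: gmin.
have lMy : lam * qf M y y = 1.
  apply/eqP; rewrite eq_le; apply/andP; split.
    by rewrite -Mx0 mulrC ler_pM2r.
  by rewrite -Dy; apply: Ray.
pose N := lam *: M - D.
have Ns : N^T = N by rewrite /N linearB /= linearZ /= Ms Ds.
have Npsd : forall x, 0 <= qf N x x by move=> x; rewrite qfB qfZm subr_ge0.
have yN : y *m N = 0.
  by apply: psd_ker Ns Npsd _; rewrite qfB qfZm lMy Dy subrr.
have yD : y *m D = lam *: (y *m M).
  by apply/eqP; rewrite eq_sym -subr_eq0 scalemxAr -mulmxBr -/N yN.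
have [a ya] := ONE y yD.
have a2 : a ^+ 2 = r^-1 ^+ 2.
  have q0n : q0 != 0 by rewrite gt_eqF.
  apply: (mulIf q0n); rewrite -{2}r2 exprVn mulVf ?gt_eqF ?exprn_gt0 //.
  by rewrite -Dy ya qfZl qfZr mulrA -expr2.
move/eqP: a2; rewrite eqf_sqr => /orP [/eqP aE|/eqP aE].
  by left; rewrite gE ya aE.
right; rewrite gE ya aE scaleNr ext_opp.
by [].
Qed.
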